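(* Let $\mathbb{F}$ be a field. Every directed tensor-labeled hypergraph $\mathcal{H}=(Q_0,Q_1,\beta)$ with $\delta(\mathcal{H})\ge1$ satisfies $|Q_1|\ge2$ and $|V_{\mathrm{macro}}|\ge3$.
   Context: $T(\mathbb{F}^{Q_0})=\bigoplus_{k\ge0}(\mathbb{F}^{Q_0})^{\otimes k}$. A directed tensor-labeled hypergraph is $\mathcal{H}=(Q_0,Q_1,\beta)$ ($Q_0,Q_1$ finite) with $\beta:\mathbb{F}^{Q_1}\to T(\mathbb{F}^{Q_0})\times T(\mathbb{F}^{Q_0})$ linear, $\beta(\mathbf{1}_e)=(A_e,B_e)$. $V_{\mathrm{macro}}=\{A_e\}\cup\{B_e\}$ (a set); $B_{\mathrm{macro}}:\mathbb{F}^{Q_1}\to\mathbb{F}^{V_{\mathrm{macro}}}$, $\mathbf{1}_e\mapsto\mathbf{1}_{B_e}-\mathbf{1}_{A_e}$; $\hat\phi:\mathbb{F}^{V_{\mathrm{macro}}}\to T(\mathbb{F}^{Q_0})$, $\mathbf{1}_w\mapsto w$; $\delta(\mathcal{H})=\dim(\mathrm{Im}B_{\mathrm{macro}}\cap\mathrm{Ker}\hat\phi)$. *)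

(* Defs.v *)
From HB Require Import structures.
From mathcomp Require Import all_boot all_order all_algebra.
From mathcomp Require Import finmap.
From mathcomp Require Import boolp.
From mathcomp.multinomials Require Import monalg.
Set Implicit Arguments. Unset Strict Implicit. Unset Printing Implicit Defensive.
Import Order.TTheory GRing.Theory Num.Theory.
Local Open Scope ring_scope.
Local Open Scope fset_scope.

(* T(F^{Q0}) = \bigoplus_k (F^{Q0})^{\otimes k}: the F-vector space freely
   spanned by the words over Q0 (a word of length k = the basis tensor
   1_{q1} (x) ... (x) 1_{qk} of (F^{Q0})^{\otimes k}). *)
Definition tensorAlg (F : fieldType) (Q0 : finType) : lmodType F :=
  {malg F[seq Q0]}.

Definition beta_type (F : fieldType) (Q0 Q1 : finType) :=
  {linear {ffun Q1 -> F^o} -> (tensorAlg F Q0 * tensorAlg F Q0)%type}.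

Section Hypergraph.
Variables (F : fieldType) (Q0 Q1 : finType) (beta : beta_type F Q0 Q1).

Definition ind (e : Q1) : {ffun Q1 -> F^o} := [ffun e' => (e' == e)%:R].

Definition A_e (e : Q1) : tensorAlg F Q0 := (beta (ind e)).1.
Definition B_e (e : Q1) : tensorAlg F Q0 := (beta (ind e)).2.

Definition Vmacro : {fset tensorAlg F Q0} :=
  [fset A_e e | e : Q1] `|` [fset B_e e | e : Q1].

Definition FV := {ffun Vmacro -> F^o}.

Definition Bmacro (x : {ffun Q1 -> F^o}) : FV :=
  \sum_(e : Q1) x e *:
     [ffun w : Vmacro => (val w == B_e e)%:R - (val w == A_e e)%:R].

Definition phihat (y : FV) : tensorAlg F Q0 :=
  \sum_(w : Vmacro) y w *: val w.

Definition in_ImB_KerPhi (y : FV) : Prop :=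
  (exists x, Bmacro x = y) /\ phihat y = 0.

(* delta(H) = dim (Im B_macro \cap Ker phihat), the dimension being the
   maximal size of a linearly independent family in this subspace
   (such a size is at most dim F^{V_macro} = #|V_macro|). *)
Definition delta : nat :=
  (\max_(n < (#|` Vmacro|).+1 |
      `[< exists X : seq FV,
            [/\ size X = n, free X & forall y, y \in X -> in_ImB_KerPhi y] >])
     n)%N.

End Hypergraph.

(* Main.v *)
Require Import Defs.
From HB Require Import structures.
From mathcomp Require Import all_boot all_order all_algebra.
From mathcomp Require Import finmap.
From mathcomp Require Import boolp.
From mathcomp.multinomials Require Import monalg.
Set Implicit Arguments. Unset Strict Implicit. Unset Printing Implicit Defensive.
Import Order.TTheory GRing.Theory Num.Theory.
From mathcomp Require Import zify.
Local Open Scope ring_scope.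
Local Open Scope fset_scope.

Lemma VQ (F : fieldType) (Q0 Q1 : finType) (beta : beta_type F Q0 Q1) :
  (#|` Vmacro beta| <= #|Q1| + #|Q1|)%N.
Proof.
rewrite /Vmacro; apply: leq_trans (leq_card_fsetU _ _) _.
apply: leq_add; apply: leq_trans (leq_imfset_card _ _ _) _; rewrite cardE //.
Qed.

Lemma scaleFo (F : fieldType) (a b : F) : a *: (b : F^o) = a * b.
Proof. by []. Qed.

Lemma sumB (F : fieldType) (Q0 Q1 : finType) (beta : beta_type F Q0 Q1) x :
  \sum_(w : Vmacro beta) Bmacro beta x w = 0.
Proof.
have H1 t : t \in Vmacro beta -> \sum_(w : Vmacro beta) ((val w == t)%:R : F) = 1.
  move=> Ht; rewrite (bigD1 [` Ht]) //= eqxx big1 ?Monoid.mulm1 //.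
  move=> w Hw; have [Hwt|] := eqVneq (fsval w) t; last by [].
  by case/eqP: Hw; apply: val_inj; rewrite /= Hwt.
have HA e : A_e beta e \in Vmacro beta by rewrite /Vmacro in_fsetU in_imfset.
have HB e : B_e beta e \in Vmacro beta by rewrite /Vmacro in_fsetU in_imfset ?orbT.
rewrite /Bmacro.
under eq_bigr => w _ do rewrite sum_ffunE.
rewrite exchange_big.
apply: big1 => e _.
transitivity (\sum_(w : Vmacro beta) x e * ((val w == B_e beta e)%:R - (val w == A_e beta e)%:R : F)).
  apply: eq_bigr => w _.
  rewrite ffunE.
  rewrite [in LHS]ffunE.
  exact: scaleFo.
move: (HB e) (HA e); move: (B_e beta e) (A_e beta e) => b a Hb Ha.
by rewrite -mulr_sumr sumrB (H1 _ Hb) (H1 _ Ha) subrr mulr0.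
Qed.

Theorem proposition4p9 (F : fieldType) (Q0 Q1 : finType)
    (beta : beta_type F Q0 Q1) :
  (1 <= delta beta)%N -> (2 <= #|Q1|)%N /\ (3 <= #|` Vmacro beta|)%N.
Proof.
move=> Hd.
have [y [Hy y0]] : exists y : FV beta, in_ImB_KerPhi y /\ y != 0.
  have [//|Hn] := pselect (exists y : FV beta, in_ImB_KerPhi y /\ y != 0).
  have : (delta beta <= 0)%N.
    apply/bigmax_leqP => i /asboolP [X [HX Hfree HXin]].
    case: X HX Hfree HXin => [<- //|z X _ Hfree HXin].
    exfalso; apply: Hn; exists z; split; first exact: HXin (mem_head _ _).
    exact: free_not0 Hfree (mem_head _ _).
  by rewrite leqNgt Hd.
case: Hy => [[x Hx] Hphi].
have Hs : \sum_w y w = 0 by rewrite -Hx sumB.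
have [w1 Hw1] : exists w1, y w1 != 0.
  have [//|Hn] := pselect (exists w1, y w1 != 0).
  case/eqP: y0; apply/ffunP => w; rewrite ffunE; apply/eqP.
  by apply: contra_notT Hn => H; exists w.
have [w2 [Hw21 Hw2]] : exists w2, w2 != w1 /\ y w2 != 0.
  have [//|Hn] := pselect (exists w2, w2 != w1 /\ y w2 != 0).
  move: Hs; rewrite (bigD1 w1) // big1 ?Monoid.mulm1 => [H|w Hw]; first by rewrite H eqxx in Hw1.
  by apply/eqP; apply: contra_notT Hn => H; exists w.
suff H3 : (3 <= #|` Vmacro beta|)%N.
  by split => //; have := VQ beta; lia.
have [[w3 [H31 H32]]|Hn] := pselect (exists w3, w3 != w1 /\ w3 != w2).
  have Hu : uniq [:: w1; w2; w3].
    rewrite /= !in_cons !in_nil (eq_sym w1 w2) (eq_sym w1 w3) (eq_sym w2 w3).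
    by rewrite (negbTE Hw21) (negbTE H31) (negbTE H32).
  rewrite cardfE cardT; apply: (uniq_leq_size Hu) => z _.
  by rewrite mem_enum.
have Hrest : forall w, (w != w1) -> (w != w2) -> False.
  by move=> w a b; case: Hn; exists w.
move: Hs; rewrite (bigD1 w1) // (bigD1 w2 Hw21) big1; last first.
  by move=> w /andP [/andP [_ a] b]; case: (Hrest w a b).
move=> Hs; change ((y w1 + (y w2 + 0))%R = 0) in Hs; rewrite addr0 in Hs.
move: Hphi; rewrite /phihat (bigD1 w1) // (bigD1 w2 Hw21) big1; last first.
  by move=> w /andP [/andP [_ a] b]; case: (Hrest w a b).
move=> Hphi.
change ((y w1 *: \val w1 + (y w2 *: \val w2 + 0))%R = 0) in Hphi.
rewrite addr0 in Hphi.
have Hy2 : y w2 = (- y w1)%R.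
  by apply/eqP; rewrite -addr_eq0 addrC Hs eqxx.
move: Hphi; rewrite Hy2 scaleNr -scalerBr => /eqP.
rewrite scaler_eq0 (negbTE Hw1) /= subr_eq0 => /eqP Hv.
by case/eqP: Hw21; apply: val_inj.
Qed.
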